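(* Let $\ell,n$ be positive integers with $2^\ell\le n$. If $A\subseteq\mathbb{Z}_{2^n}$ satisfies $|A|>(1-2^{-\ell})2^n$, then there exist $x,y\in\mathbb{Z}_{2^n}$ such that $\Sigma^*\{\underbrace{x,\dots,x}_{2^\ell-1},y\}\subseteq A$.
   Context: For a multiset $S=\{a_1,\dots,a_d\}$ of (not necessarily distinct) elements of $\mathbb{Z}_{2^n}$, $\Sigma^*S=\{\sum_{i\in I}a_i \bmod 2^n:\emptyset\ne I\subseteq[d]\}$. Thus $\Sigma^*\{x,\dots,x,y\}$ (with $2^\ell-1$ copies of $x$) equals $\{jx: 1\le j\le 2^\ell-1\}\cup\{y+jx: 0\le j\le 2^\ell-1\}$. *)

(* Defs.v *)
From mathcomp Require Import all_boot all_order all_algebra.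
Set Implicit Arguments. Unset Strict Implicit. Unset Printing Implicit Defensive.
Import GRing.Theory.
Local Open Scope ring_scope.

Definition sigma_star (G : finZmodType) (s : seq G) : {set G} :=
  [set x : G | [exists I : {set 'I_(size s)},
     (I != set0) && (x == \sum_(i in I) s`_i)]].

Definition copies_then (G : zmodType) (k : nat) (x y : G) : seq G :=
  rcons (nseq k x) y.

(* Main.v *)
Require Import Defs.
From mathcomp Require Import all_boot all_order all_algebra.
From mathcomp Require Import zify.
Set Implicit Arguments. Unset Strict Implicit. Unset Printing Implicit Defensive.
Import GRing.Theory.

Section Aux.
Variables (p n : nat).
Hypothesis hp : p.+2 = 2 ^ n.
Hypothesis hn : (0 < n)%N.
Local Notation G := 'I_p.+2.
Local Open Scope ring_scope.

Lemma podd : odd p = false.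
Proof. have := congr1 odd hp; rewrite oddX /=; case: n hn => // m _; by rewrite negbK => ->. Qed.

Lemma valMn (x : G) j : val (x *+ j) = (x * j %% p.+2)%N.
Proof. by rewrite Zp_mulrn. Qed.

Definition U : {set G} := [set x : G | odd x].

Lemma cardU : (p.+2 <= 2 * #|U|)%N.
Proof.
have h : (#|~: U| <= #|U|)%N.
  have inj : injective (fun x : G => x + 1) by exact: addIr.
  rewrite -(card_imset _ inj); apply: subset_leq_card.
  apply/subsetP => z /imsetP [x]; rewrite !inE => hx ->.
  rewrite /= (modn_small (isT : 1 < p.+2)%N).
  have hx2 : (x : nat) != p.+1.
    by apply: contraNneq hx => ->; rewrite /= podd.
  have xl := ltn_ord x.
  rewrite modn_small; last by lia.
  by rewrite addn1 /=.
have := cardsC U; rewrite card_ord; lia.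
Qed.

Lemma sumB_card (T : finType) (A : {set T}) (P : pred T) :
  (\sum_(x in A) (P x : nat) = #|[set x in A | P x]|)%N.
Proof.
rewrite -sum1_card big_mkcond /= [RHS]big_mkcond /=.
by apply: eq_bigr => i _; rewrite !inE; case: (i \in A); case: (P i).
Qed.


Definition c (B : {set G}) j := (\sum_(x in U) ((x *+ j) \in B : nat))%N.


Lemma c_odd B j : odd j -> (c B j <= #|B :&: U|)%N.
Proof.
move=> oj. rewrite /c (sumB_card U (fun x => x *+ j \in B)).
have un : (j%:R : 'Z_(p.+2)) \is a GRing.unit.
  by rewrite unitZpE // hp coprime_pexpl // coprime2n.
have inj : injective (fun x : G => x *+ j).
  move=> x y /=; rewrite -[x *+ j]mulr_natr -[y *+ j]mulr_natr; exact: (mulIr un).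
rewrite -(card_imset _ inj); apply: subset_leq_card.
apply/subsetP => z /imsetP [x]; rewrite !inE => /andP [hx hb] ->.
rewrite hb /= valMn odd_mod; last by rewrite /= negbK podd.
by rewrite oddM hx oj.
Qed.

Definition B1 (B : {set G}) := [set z : G | z *+ 2 \in B].

Lemma c_even B i : c B (i.*2) = c (B1 B) i.
Proof.
rewrite /c; apply: eq_bigr => x _; by rewrite inE -muln2 mulrnA.
Qed.


Lemma B1_bound B : (#|B1 B| <= 2 * #|B :\: U|)%N.
Proof.
have hN : p.+2 = (2 ^ n.-1 * 2)%N by rewrite hp -expnSr prednK.
set h := (2 ^ n.-1)%N in hN.
have v2 (z : G) : val (z *+ 2) = (if (z < h)%N then z * 2 else z * 2 - h * 2)%N.
  have zl : (z < h * 2)%N by rewrite -hN.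
  rewrite valMn; rewrite [X in (_ %% X)%N]hN; case: ifP => hz.
    by rewrite modn_small //; lia.
  have -> : (z * 2 = (z * 2 - h * 2) + h * 2)%N by lia.
  by rewrite modnDr modn_small; lia.
have ev (z : G) : z *+ 2 \in B -> z *+ 2 \in B :\: U.
  by move=> hz; rewrite !inE hz andbT valMn odd_mod ?oddM ?andbF //= negbK podd.
have sub (P : pred G) : {in P &, injective (fun z : G => z *+ 2)} ->
    (#|B1 B :&: [set z | P z]| <= #|B :\: U|)%N.
  move=> inj; rewrite -(card_in_imset (f := fun z : G => z *+ 2)); last first.
    by move=> x y; rewrite !inE => /andP [_ hx] /andP [_ hy]; apply: inj.
  apply: subset_leq_card; apply/subsetP => w /imsetP [z]; rewrite !inE.
  by move=> /andP [hz _] ->; have := ev z hz; rewrite !inE.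
rewrite -(cardsID [set z : G | (z < h)%N] (B1 B)) mul2n -addnn.
apply: leq_add.
  apply: sub => x y hx hy /(congr1 val).
  have hx' : (x < h)%N by exact: hx.
  have hy' : (y < h)%N by exact: hy.
  rewrite !v2 hx' hy' => e.
  by apply: val_inj => /=; lia.
have -> : B1 B :\: [set z : G | (z < h)%N] = B1 B :&: [set z : G | ~~ (z < h)%N].
  by apply/setP => z; rewrite !inE andbC.
apply: sub => x y hx hy /(congr1 val).
have hx' : (x < h)%N = false by apply: negbTE; exact: hx.
have hy' : (y < h)%N = false by apply: negbTE; exact: hy.
have xl : (x < h * 2)%N by rewrite -hN.
have yl : (y < h * 2)%N by rewrite -hN.
rewrite !v2 hx' hy' => e.
apply: val_inj => /=; move/negbT: hx'; move/negbT: hy'; rewrite -!leqNgt; lia.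
Qed.

Definition F (B : {set G}) l := (\sum_(0 <= j < 2 ^ l) (j != 0%N) * c B j)%N.

Lemma pair_sum (f : nat -> nat) m :
  (\sum_(0 <= j < m.*2) f j = \sum_(0 <= i < m) f (i.*2) + \sum_(0 <= i < m) f (i.*2.+1))%N.
Proof.
elim: m => [|m IH]; first by rewrite !big_geq.
rewrite doubleS !big_nat_recr //= IH; lia.
Qed.

Lemma F_bound l B : (2 * F B l <= 2 ^ l * #|B|)%N.
Proof.
elim: l B => [|l IH] B; first by rewrite /F expn0 big_nat1.
rewrite /F expnS [(2 * 2 ^ l)%N]mul2n pair_sum -/(F _ l).
have -> : (\sum_(0 <= i < 2 ^ l) (i.*2 != 0%N) * c B i.*2 = F (B1 B) l)%N.
  by apply: eq_bigr => i _; rewrite c_even double_eq0.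
have ho : (\sum_(0 <= i < 2 ^ l) (i.*2.+1 != 0%N) * c B i.*2.+1 <= 2 ^ l * #|B :&: U|)%N.
  apply: leq_trans (_ : \sum_(0 <= i < 2 ^ l) #|B :&: U| <= _)%N.
    apply: leq_sum => i _; rewrite mul1n; apply: c_odd.
    by rewrite /= odd_double.
  by rewrite sum_nat_const_nat subn0.
have h1 := IH (B1 B).
have h2 := B1_bound B.
have h3 := cardsID U B.
rewrite -h3.
have h4 : (2 ^ l * #|B1 B| <= 2 ^ l * (2 * #|B :\: U|))%N by rewrite leq_mul2l h2 orbT.
rewrite -mul2n mulnDr [X in (_ <= X)%N]mulnDr addnC.
apply: leq_add.
  by rewrite -mulnA leq_mul2l ho orbT.
  apply: leq_trans h1 _; apply: leq_trans h4 _.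
by rewrite mulnA (mulnC (2 ^ l)%N 2).
Qed.

Lemma exists_zero (T : finType) (A : {set T}) (g : T -> nat) :
  (\sum_(x in A) g x < #|A|)%N -> exists2 x, x \in A & g x = 0%N.
Proof.
move=> hs; case E: [exists x in A, g x == 0%N].
  by case/exists_inP: E => x hx /eqP; exists x.
move/negbT: E; rewrite negb_exists_in => /forall_inP hA.
have : (#|A| <= \sum_(x in A) g x)%N.
  rewrite -sum1_card; apply: leq_sum => x hx; rewrite lt0n; exact: hA.
by rewrite leqNgt hs.
Qed.

Lemma exists_x l (B : {set G}) : (2 ^ l * #|B| < p.+2)%N ->
  exists x : G, forall j, (0 < j < 2 ^ l)%N -> ~~ (x *+ j \in B).
Proof.
move=> hB.
have hF : (F B l < #|U|)%N by have := F_bound l B; have := cardU; lia.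
have eF : F B l = (\sum_(x in U) \sum_(0 <= j < 2 ^ l) (j != 0%N) * (x *+ j \in B))%N.
  rewrite /F /c; under eq_bigr => j _ do rewrite big_distrr /=.
  exact: exchange_big.
rewrite eF in hF; case: (exists_zero hF) => x _ /eqP.
rewrite sum_nat_seq_eq0 => /allP H; exists x => j /andP [j0 jl].
have := H j; rewrite mem_index_iota jl /= => /(_ isT).
by rewrite -lt0n j0 mul1n eqb0.
Qed.

Lemma exists_y l (B : {set G}) (x : G) : (2 ^ l * #|B| < p.+2)%N ->
  exists y : G, forall j, (j < 2 ^ l)%N -> ~~ (y + x *+ j \in B).
Proof.
move=> hB.
have hs : (\sum_(y in [set: G]) \sum_(0 <= j < 2 ^ l) ((y + x *+ j)%R \in B : nat) < #|[set: G]|)%N.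
  rewrite exchange_big /=.
  have -> : (\sum_(0 <= j < 2 ^ l) \sum_(y in [set: G]) ((y + x *+ j)%R \in B : nat) = \sum_(0 <= j < 2 ^ l) #|B|)%N.
    apply: eq_bigr => j _.
    rewrite (eq_bigl (fun _ => true)); last by move=> y; rewrite inE.
    rewrite -(reindex_inj (addIr (x *+ j)) (F := fun y => (y \in B : nat)) (P := fun _ => true)) /=.
    by rewrite -sum1_card [RHS]big_mkcond /=; apply: eq_bigr => y _.
  by rewrite sum_nat_const_nat subn0 cardsT card_ord mulnC in hB *.
case: (exists_zero hs) => y _ /eqP.
rewrite sum_nat_seq_eq0 => /allP H; exists y => j jl.
have := H j; rewrite mem_index_iota jl /= => /(_ isT).
by rewrite eqb0.
Qed.
End Aux.
Section SS.
Local Open Scope ring_scope.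
Lemma sigma_sub (G : finZmodType) (A : {set G}) (k : nat) (x y : G) :
  (forall j, (0 < j <= k)%N -> x *+ j \in A) ->
  (forall j, (j <= k)%N -> y + x *+ j \in A) ->
  sigma_star (copies_then k x y) \subset A.
Proof.
move=> hx hy.
apply/subsetP => z; rewrite inE => /existsP [I /andP [I0 /eqP ->]].
set s := copies_then k x y.
have hs : size s = k.+1 by rewrite size_rcons size_nseq.
have ko : (k < size s)%N by rewrite hs.
set o := Ordinal ko.
have nth_s (i : 'I_(size s)) : i != o -> s`_i = x.
  move=> hi; have ik : (i < k)%N.
    have : (i < k.+1)%N by rewrite -hs.
    rewrite ltnS leq_eqVlt; case/orP => // /eqP e.
    by exfalso; move/eqP: hi; apply; apply: val_inj.
  by rewrite /s /copies_then nth_rcons size_nseq ik nth_nseq ik.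
have nth_o : s`_o = y by rewrite /s /copies_then nth_rcons size_nseq ltnn eqxx.
have cI : (#|I| <= k.+1)%N by rewrite -hs -[X in (_ <= X)%N]card_ord max_card.
case: (boolP (o \in I)) => oI.
  rewrite (bigD1 o) //= nth_o.
  rewrite (eq_bigr (fun _ => x)); last by move=> i /andP [_ hi]; apply: nth_s.
  rewrite (eq_bigl (fun i => i \in I :\ o)); last by move=> i; rewrite in_setD1 andbC.
  rewrite sumr_const; apply: hy.
  have := cardsD1 o I; rewrite oI /= add1n => e; rewrite -ltnS -e; exact: cI.
rewrite (eq_bigr (fun _ => x)); last first.
  by move=> i iI; apply: nth_s; apply: contraNneq oI => <-.
rewrite sumr_const; apply: hx.
rewrite card_gt0 I0 /=.
have : I \subset [set~ o].
  by apply/subsetP => i iI; rewrite !inE; apply: contraNneq oI => <-.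
move/subset_leq_card; rewrite cardsC1 card_ord => h; apply: leq_trans h _; rewrite hs //.
Qed.
End SS.

Theorem theorem2p1 (l n : nat) (hl : (0 < l)%N) (hn : (0 < n)%N)
  (hln : (2 ^ l <= n)%N) (A : {set 'Z_(2 ^ n)}) :
  ((2 ^ l - 1) * 2 ^ n < #|A| * 2 ^ l)%N ->
  exists x y : 'Z_(2 ^ n),
    sigma_star (copies_then (2 ^ l - 1) x y) \subset A.
Proof.
move=> hA.
have h2 : (1 < 2 ^ n)%N by rewrite -{1}(expn0 2) ltn_exp2l.
have hp := Zp_cast h2.
have hB : (2 ^ l * #|~: A| < (Zp_trunc (2 ^ n)).+2)%N.
  have e := cardsC A; rewrite card_ord in e.
  move: e hA; move: #|A| #|~: A| => a b; rewrite hp.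
  have : (0 < 2 ^ l)%N by rewrite expn_gt0.
  move: (2 ^ n)%N (2 ^ l)%N => N P; nia.
have [x hx] := exists_x hp hn hB.
have [y hy] := exists_y x hB.
exists x, y; apply: sigma_sub.
  move=> j /andP [j0 jk].
  have jl : (0 < j < 2 ^ l)%N by rewrite j0 /=; have := expn_gt0 2 l; lia.
  by have := hx j jl; rewrite inE negbK.
move=> j jk.
have jl : (j < 2 ^ l)%N by have := expn_gt0 2 l; lia.
by have := hy j jl; rewrite inE negbK.
Qed.
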